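(* Let $a=(a^1,\ldots,a^M)\in\mathcal{C}^M$, $b=(b^1,\ldots,b^M)\in\mathcal{S}^M$ be type sequences whose FCFS matching $A$ is perfect. Form the exchanged sequences $\tilde{b}^m=b^n$, $\tilde{a}^n=a^m$ for $(m,n)\in A$, and then reverse time, obtaining the block $\overleftarrow{a}=(\tilde{a}^M,\ldots,\tilde{a}^1)$ (customers) and $\overleftarrow{b}=(\tilde{b}^M,\ldots,\tilde{b}^1)$ (servers). Then the FCFS matching of $\overleftarrow{a},\overleftarrow{b}$ is perfect, and for the i.i.d. sequences and any $m\in\mathbb{Z}$, $$P\big((c^{m+1},\ldots,c^{m+M})=\overleftarrow{a},(s^{m+1},\ldots,s^{m+M})=\overleftarrow{b}\mid\text{perfect}\big)=P\big((c^{m+1},\ldots,c^{m+M})=a,(s^{m+1},\ldots,s^{m+M})=b\mid\text{perfect}\big),$$ where ''perfect'' is the event that the FCFS matching of the two blocks of length $M$ is perfect.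
   Context: Let $\mathcal{C}$ and $\mathcal{S}$ be finite sets of customer and server types and $G=(\mathcal{C},\mathcal{S},\mathcal{E})$ a connected bipartite compatibility graph. $(c^m)_{m\in\mathbb{Z}}$ i.i.d. with law $\alpha$ and $(s^n)_{n\in\mathbb{Z}}$ i.i.d. with law $\beta$, independent, all probabilities positive. The FCFS matching of finite sequences is the unique complete matching (compatible index pairs, each index at most once, no unmatched compatible pair left) such that for every matched $(m,n)$ every compatible earlier server $s^l$, $l<n$, is matched to some customer $c^k$ with $k<m$ and every compatible earlier customer $c^k$, $k<m$, is matched to some $s^l$ with $l<n$; it is perfect if all items are matched. *)

(* Defs.v *)
From HB Require Import structures.
From mathcomp Require Import all_boot all_order all_algebra.
Set Implicit Arguments. Unset Strict Implicit. Unset Printing Implicit Defensive.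
Import Order.TTheory GRing.Theory Num.Theory.

Section FCFS.
Variables (C S : finType) (compat : C -> S -> bool) (M : nat).

Definition bip_adj : rel (C + S) := fun u v =>
  match u, v with
  | inl c, inr s => compat c s
  | inr s, inl c => compat c s
  | _, _ => false
  end.
Definition bip_connected : Prop := forall u v : C + S, connect bip_adj u v.

(* A matching of the blocks a (customers) and b (servers), indices 'I_M
   (index i stands for position i+1); (m, n) \in A means c^m matched to s^n. *)
Definition is_fcfs_matching (a : {ffun 'I_M -> C}) (b : {ffun 'I_M -> S})
    (A : {set 'I_M * 'I_M}) : bool :=
  [&& [forall p in A, compat (a p.1) (b p.2)],
      [forall m, forall n, forall n',
          ((m, n) \in A) && ((m, n') \in A) ==> (n == n')],
      [forall m, forall m', forall n,
          ((m, n) \in A) && ((m', n) \in A) ==> (m == m')],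
      [forall m, forall n, compat (a m) (b n) ==>
          [exists n', (m, n') \in A] || [exists m', (m', n) \in A]] &
      [forall p in A,
          [forall l : 'I_M, ((l < p.2)%N && compat (a p.1) (b l)) ==>
                      [exists k : 'I_M, ((k < p.1)%N && ((k, l) \in A))]] &&
          [forall k : 'I_M, ((k < p.1)%N && compat (a k) (b p.2)) ==>
                      [exists l : 'I_M, ((l < p.2)%N && ((k, l) \in A))]]]].

Definition perfect_matching (A : {set 'I_M * 'I_M}) : bool :=
  [forall m, exists n, (m, n) \in A] && [forall n, exists m, (m, n) \in A].

(* "The FCFS matching of (a, b) is perfect" (the FCFS matching is unique). *)
Definition fcfs_perfect (a : {ffun 'I_M -> C}) (b : {ffun 'I_M -> S}) : bool :=
  [exists A, is_fcfs_matching a b A && perfect_matching A].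

(* Exchanged sequences: btilde^m = b^n and atilde^n = a^m for (m,n) \in A
   (the default branch is never used when A is perfect). *)
Definition exch_b (b : {ffun 'I_M -> S}) (A : {set 'I_M * 'I_M})
  : {ffun 'I_M -> S} :=
  [ffun m => if [pick n | (m, n) \in A] is Some n then b n else b m].
Definition exch_a (a : {ffun 'I_M -> C}) (A : {set 'I_M * 'I_M})
  : {ffun 'I_M -> C} :=
  [ffun n => if [pick m | (m, n) \in A] is Some m then a m else a n].

Definition rev_block (T : Type) (x : {ffun 'I_M -> T}) : {ffun 'I_M -> T} :=
  [ffun i => x (rev_ord i)].

Variables (R : realFieldType) (alpha : C -> R) (beta : S -> R).

(* P((c^{m+1..m+M}) = x, (s^{m+1..m+M}) = y) for the i.i.d. sequences
   (independent of m). *)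
Definition block_prob (x : {ffun 'I_M -> C}) (y : {ffun 'I_M -> S}) : R :=
  (\prod_i alpha (x i) * \prod_i beta (y i))%R.

Definition prob_perfect : R :=
  (\sum_(x : {ffun 'I_M -> C}) \sum_(y : {ffun 'I_M -> S})
     if fcfs_perfect x y then block_prob x y else 0)%R.

Definition cond_prob_perfect (x : {ffun 'I_M -> C}) (y : {ffun 'I_M -> S}) : R :=
  ((if fcfs_perfect x y then block_prob x y else 0) / prob_perfect)%R.

End FCFS.

(* Main.v *)
Require Import Defs.
From HB Require Import structures.
From mathcomp Require Import all_boot all_order all_algebra.
From mathcomp Require Import zify.
Import Order.TTheory GRing.Theory Num.Theory.

Lemma rev_lt (M : nat) (x y : 'I_M) : (rev_ord x < rev_ord y)%N = (y < x)%N.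
Proof. rewrite /=; have := ltn_ord x; have := ltn_ord y; lia. Qed.

Theorem corollary4p1 (C S : finType) (compat : C -> S -> bool)
  (Gconn : bip_connected compat)
  (R : realFieldType) (alpha : C -> R) (beta : S -> R)
  (alpha_pos : forall c, (0 < alpha c)%R) (beta_pos : forall s, (0 < beta s)%R)
  (alpha_sum : (\sum_c alpha c = 1)%R) (beta_sum : (\sum_s beta s = 1)%R)
  (M : nat) (a : {ffun 'I_M -> C}) (b : {ffun 'I_M -> S})
  (A : {set 'I_M * 'I_M})
  (HA : is_fcfs_matching compat a b A) (HAp : perfect_matching A) :
  let ra := rev_block (exch_a a A) in
  let rb := rev_block (exch_b b A) in
  fcfs_perfect compat ra rb /\
  cond_prob_perfect compat alpha beta ra rb = cond_prob_perfect compat alpha beta a b.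
Proof.
move=> ra rb.
have HA0 := HA.
move: HA => /and5P [H1 H2 H3 H4 H5].
have hc : forall m n : 'I_M, (m, n) \in A -> compat (a m) (b n).
  by move=> m n mn; move/forall_inP: H1 => /(_ _ mn).
have hf : forall m n n' : 'I_M, (m, n) \in A -> (m, n') \in A -> n = n'.
  move=> m n n' h h'; move/forallP: H2 => /(_ m) /forallP /(_ n) /forallP /(_ n').
  by rewrite h h' => /eqP.
have hi : forall m m' n : 'I_M, (m, n) \in A -> (m', n) \in A -> m = m'.
  move=> m m' n h h'; move/forallP: H3 => /(_ m) /forallP /(_ m') /forallP /(_ n).
  by rewrite h h' => /eqP.
have h5a : forall m n l : 'I_M, (m, n) \in A -> (l < n)%N -> compat (a m) (b l) ->
    exists2 k : 'I_M, (k < m)%N & (k, l) \in A.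
  move=> m n l h ln cl; move/forall_inP: H5 => /(_ _ h) /andP [/forallP /(_ l) + _].
  by rewrite /= ln cl /= => /existsP [k /andP [k1 k2]]; exists k.
have h5b : forall m n k : 'I_M, (m, n) \in A -> (k < m)%N -> compat (a k) (b n) ->
    exists2 l : 'I_M, (l < n)%N & (k, l) \in A.
  move=> m n k h km ck; move/forall_inP: H5 => /(_ _ h) /andP [_ /forallP /(_ k)].
  by rewrite /= km ck /= => /existsP [l /andP [l1 l2]]; exists l.
move: HAp => /andP [/forallP hp1 /forallP hp2].
have pb : forall m n, (m, n) \in A -> exch_b b A m = b n.
  move=> m n h; rewrite /exch_b ffunE; case: pickP => [n' h'|/(_ n)]; last by rewrite h.
  by rewrite (hf _ _ _ h h').
have pa : forall m n, (m, n) \in A -> exch_a a A n = a m.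
  move=> m n h; rewrite /exch_a ffunE; case: pickP => [m' h'|/(_ m)]; last by rewrite h.
  by rewrite (hi _ _ _ h h').
have rae : forall i j, (rev_ord j, rev_ord i) \in A -> ra i = a (rev_ord j).
  by move=> i j h; rewrite /ra /rev_block ffunE (pa _ _ h).
have rbe : forall i j, (rev_ord j, rev_ord i) \in A -> rb j = b (rev_ord i).
  by move=> i j h; rewrite /rb /rev_block ffunE (pb _ _ h).
pose A' := [set p : 'I_M * 'I_M | (rev_ord p.2, rev_ord p.1) \in A].
have inA' : forall i j, ((i, j) \in A') = ((rev_ord j, rev_ord i) \in A).
  by move=> i j; rewrite inE.
have perf : fcfs_perfect compat ra rb.
  apply/existsP; exists A'; apply/andP; split; last first.
    apply/andP; split; apply/forallP.
    - move=> i; case/existsP: (hp2 (rev_ord i)) => m h.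
      by apply/existsP; exists (rev_ord m); rewrite inA' rev_ordK.
    - move=> j; case/existsP: (hp1 (rev_ord j)) => n h.
      by apply/existsP; exists (rev_ord n); rewrite inA' rev_ordK.
  apply/and5P; split.
  - apply/forall_inP => -[i j]; rewrite inA' /= => h.
    by rewrite (rae _ _ h) (rbe _ _ h) hc.
  - apply/forallP => i; apply/forallP => j; apply/forallP => j'.
    apply/implyP => /andP []; rewrite !inA' => h h'.
    by apply/eqP; apply: rev_ord_inj; apply: hi h h'.
  - apply/forallP => i; apply/forallP => i'; apply/forallP => j.
    apply/implyP => /andP []; rewrite !inA' => h h'.
    by apply/eqP; apply: rev_ord_inj; apply: hf h h'.
  - apply/forallP => i; apply/forallP => j; apply/implyP => _.
    case/existsP: (hp2 (rev_ord i)) => m h.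
    by apply/orP; left; apply/existsP; exists (rev_ord m); rewrite inA' rev_ordK.
  - apply/forall_inP => -[i j]; rewrite inA' /= => h.
    apply/andP; split; apply/forallP.
    + move=> l; apply/implyP => /andP [lj].
      case/existsP: (hp1 (rev_ord l)) => n' h'.
      rewrite (rae _ _ h) (rbe (rev_ord n') l); last by rewrite rev_ordK.
      move=> cl; rewrite rev_ordK in cl.
      apply/existsP; exists (rev_ord n'); rewrite inA' rev_ordK h' andbT.
      rewrite -[in X in (_ < X)%N](rev_ordK i) rev_lt.
      case: (ltngtP (rev_ord i) n') => // [lt|eq].
      * case: (h5a _ _ _ h lt cl) => k k1 k2.
        have := hi _ _ _ k2 h'; move=> ek; move: k1; rewrite ek rev_lt.
        by move=> jl; have := ltn_trans jl lj; rewrite ltnn.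
      * have eqi : rev_ord i = n' by apply: val_inj.
        move: h'; rewrite -eqi => h'.
        have := hi _ _ _ h h' => /rev_ord_inj ej.
        by move: lj; rewrite ej ltnn.
    + move=> k; apply/implyP => /andP [ki].
      case/existsP: (hp2 (rev_ord k)) => m' h'.
      rewrite (rbe _ _ h) (rae k (rev_ord m')); last by rewrite rev_ordK.
      move=> ck; rewrite rev_ordK in ck.
      apply/existsP; exists (rev_ord m'); rewrite inA' rev_ordK h' andbT.
      rewrite -[in X in (_ < X)%N](rev_ordK j) rev_lt.
      case: (ltngtP (rev_ord j) m') => // [lt|eq].
      * case: (h5b _ _ _ h lt ck) => l l1 l2.
        have := hf _ _ _ l2 h'; move=> el; move: l1; rewrite el rev_lt.
        by move=> ik; have := ltn_trans ik ki; rewrite ltnn.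
      * have eqj : rev_ord j = m' by apply: val_inj.
        move: h'; rewrite -eqj => h'.
        have := hf _ _ _ h h' => /rev_ord_inj ei.
        by move: ki; rewrite ei ltnn.
split=> //.
have perfab : fcfs_perfect compat a b.
  by apply/existsP; exists A; rewrite HA0 /=; apply/andP; split; apply/forallP; [exact: hp1 | exact: hp2].
rewrite /cond_prob_perfect perf perfab; congr (_ / _)%R.
rewrite /block_prob; congr (_ * _)%R.
- pose g n := odflt n [pick m | (m, n) \in A].
  have gA : forall n, (g n, n) \in A.
    move=> n; rewrite /g; case: pickP => [m //|H] /=.
    by case/existsP: (hp2 n) => m; rewrite H.
  have ginj : injective g.
    by move=> n n' e; apply: (hf (g n)); [apply: gA | rewrite e; apply: gA].
  rewrite (reindex_inj rev_ord_inj) /=.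
  under eq_bigr => i _ do rewrite /ra /rev_block ffunE rev_ordK (pa _ _ (gA i)).
  by rewrite [RHS](reindex_inj ginj).
- pose f m := odflt m [pick n | (m, n) \in A].
  have fA : forall m, (m, f m) \in A.
    move=> m; rewrite /f; case: pickP => [n //|H] /=.
    by case/existsP: (hp1 m) => n; rewrite H.
  have finj : injective f.
    by move=> m m' e; apply: (hi _ _ (f m)); [apply: fA | rewrite e; apply: fA].
  rewrite (reindex_inj rev_ord_inj) /=.
  under eq_bigr => i _ do rewrite /rb /rev_block ffunE rev_ordK (pb _ _ (fA i)).
  by rewrite [RHS](reindex_inj finj).
Qed.
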